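(* On $V_N$ (with the $H_n(N/n)$-action $\zeta_N$) one has $\mathbf h=H$, $\mathbf e=\frac NnE$, $\mathbf f=\frac nNF$, where $\mathbf h=\frac12\sum_i(\mathrm x_i\mathrm y_i+\mathrm y_i\mathrm x_i)$, $\mathbf e=\frac12\sum_i\mathrm y_i^2$, $\mathbf f=\frac12\sum_i\mathrm x_i^2$, and $H=\sum_pb_p\frac{\partial}{\partial b_p}+\frac{\dim\mathfrak g}2$, $F=\frac12\sum_pb_p^2$, $E=\frac12\Delta_{\mathfrak g}$ act on the $\mathbb C[\mathfrak g]$ factor.
   Context: $N$ divides $n$, $\mathfrak g=\mathfrak{sl}_N(\mathbb C)$, $V_N=(\mathbb C[\mathfrak g]\otimes(\mathbb C^N)^{\otimes n})^{\mathfrak g}$. $\{b_p\}$ is an orthonormal basis of $\mathfrak g$ for the trace form; $b_p$ also denotes the corresponding linear coordinate function (multiplication operator) on $\mathfrak g$, $\partial/\partial b_p$ the directional derivative, and $\Delta_{\mathfrak g}=\sum_p\partial^2/\partial b_p^2$ the Laplacian. $H_n(k)$ is the rational Cherednik algebra of type $A_{n-1}$ (quotient of $\mathbb C[S_n]\ltimes\mathbb C\langle\mathrm x_i,\mathrm y_i\rangle$ by $\sum\mathrm x_i=\sum\mathrm y_i=0$, $[\mathrm x_i,\mathrm x_j]=[\mathrm y_i,\mathrm y_j]=0$, $[\mathrm x_i,\mathrm y_j]=\frac1n-ks_{ij}$ for $i\ne j$), acting on $V_N$ via $\zeta_N$: $s_{ij}$ permutes tensor factors, $(\mathrm x_if)(A)=A_if(A)$,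 $(\mathrm y_if)(A)=\frac Nn\sum_p(b_p)_i\frac{\partial f}{\partial b_p}(A)$, where $B_i$ is $B$ acting on the $i$-th factor of $(\mathbb C^N)^{\otimes n}$. *)

(* Defs.v *)
From HB Require Import structures.
From mathcomp Require Import all_boot all_order all_algebra.
From mathcomp Require Import mpoly.
Set Implicit Arguments. Unset Strict Implicit. Unset Printing Implicit Defensive.
Import Order.TTheory GRing.Theory Num.Theory.
Local Open Scope ring_scope.

(* C[g] (x) (C^N)^{(x) n} is modelled as functions from multi-indices
   J : 'I_n -> 'I_N (basis e_{J 0} (x) ... (x) e_{J (n-1)}) to polynomials in the
   dim g = N^2 - 1 linear coordinates b_p (the mpoly variable 'X_p is the
   coordinate function b_p, i.e. A = \sum_p 'X_p(A) b_p). *)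

Definition dimg (N : nat) : nat := (N ^ 2 - 1)%N.

Definition tens (C : numClosedFieldType) (N n : nat) :=
  {ffun {ffun 'I_n -> 'I_N} -> {mpoly C[dimg N]}}.

Section Ops.
Variables (C : numClosedFieldType) (N n : nat).
Variable b : 'I_(dimg N) -> 'M[C]_N.
Local Notation T := (tens C N n).

Definition upd (J : {ffun 'I_n -> 'I_N}) (i : 'I_n) (k : 'I_N) :
  {ffun 'I_n -> 'I_N} := [ffun j => if j == i then k else J j].

Definition actAt (B : 'M[C]_N) (i : 'I_n) (f : T) : T :=
  [ffun J : {ffun 'I_n -> 'I_N} => \sum_(k < N) B (J i) k *: f (upd J i k)].

Definition mulP (p : {mpoly C[dimg N]}) (f : T) : T := [ffun J : {ffun 'I_n -> 'I_N} => p * f J].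

Definition dP (p : 'I_(dimg N)) (f : T) : T := [ffun J : {ffun 'I_n -> 'I_N} => mderiv p (f J)].

(* zeta_N(x_i) f (A) = A_i f(A),  A_i = \sum_q b_q(A) (b_q)_i *)
Definition xop (i : 'I_n) (f : T) : T := \sum_q mulP 'X_q (actAt (b q) i f).

(* zeta_N(y_i) f = N/n \sum_p (b_p)_i d f / d b_p *)
Definition yop (i : 'I_n) (f : T) : T :=
  ((N%:R / n%:R : C) *: \sum_p actAt (b p) i (dP p f)).

Definition hop (f : T) : T := 2^-1 *: \sum_i (xop i (yop i f) + yop i (xop i f)).
Definition eop (f : T) : T := 2^-1 *: \sum_i yop i (yop i f).
Definition fop (f : T) : T := 2^-1 *: \sum_i xop i (xop i f).

Definition Hop (f : T) : T :=
  \sum_p mulP 'X_p (dP p f) + ((dimg N)%:R / 2) *: f.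
Definition Eop (f : T) : T := 2^-1 *: \sum_p dP p (dP p f).
Definition Fop (f : T) : T := 2^-1 *: \sum_p mulP ('X_p * 'X_p) f.

(* g-invariance of f in C[g] (x) (C^N)^{(x) n}: for every X in sl_N,
   (\sum_i X_i) f(A) = D f(A)[[X, A]], where (as A = \sum_q b_q(A) b_q and the
   basis is orthonormal) the p-th coordinate of [X, A] is
   \sum_q tr([X, b_q] b_p) b_q(A). *)
Definition g_invariant (f : T) : Prop :=
  forall X : 'M[C]_N, \tr X = 0 ->
    \sum_i actAt X i f =
    \sum_p mulP (\sum_q \tr ((X *m b q - b q *m X) *m b p) *: 'X_q) (dP p f).

End Ops.

(* Main.v *)
Require Import Defs.
From HB Require Import structures.
From mathcomp Require Import all_boot all_order all_algebra.
From mathcomp Require Import mpoly.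
From mathcomp Require Import zify ring.
Import Order.TTheory GRing.Theory Num.Theory.
Local Open Scope ring_scope.
Set Implicit Arguments. Unset Strict Implicit.

Section Lin.
Variables (C : numClosedFieldType) (N n : nat).
Local Notation T := (tens C N n).
Local Notation P := {mpoly C[dimg N]}.

Lemma actAt_lin (B : 'M[C]_N) i : linear (@actAt C N n B i).
Proof.
move=> a f g; apply/ffunP=> J; rewrite !ffunE scaler_sumr -big_split /=.
by apply: eq_bigr=> k _; rewrite !ffunE scalerDr !scalerA mulrC.
Qed.
HB.instance Definition _ B i := GRing.isLinear.Build C T T *:%R (@actAt C N n B i) (actAt_lin B i).

Lemma mulP_lin (p : P) : linear (@mulP C N n p).
Proof.
by move=> a f g; apply/ffunP=> J; rewrite !ffunE mulrDr scalerAr.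
Qed.
HB.instance Definition _ p := GRing.isLinear.Build C T T *:%R (@mulP C N n p) (mulP_lin p).

Lemma dP_lin p : linear (@dP C N n p).
Proof.
by move=> a f g; apply/ffunP=> J; rewrite !ffunE mderivD mderivZ.
Qed.
HB.instance Definition _ p := GRing.isLinear.Build C T T *:%R (@dP C N n p) (dP_lin p).

Lemma actAtBD (B B' : 'M[C]_N) i (f : T) : actAt (B + B') i f = actAt B i f + actAt B' i f.
Proof.
apply/ffunP=> J; rewrite !ffunE -big_split; apply: eq_bigr=> k _; by rewrite mxE scalerDl.
Qed.

Lemma actAt0B i (f : T) : actAt 0 i f = 0.
Proof. by apply/ffunP=> J; rewrite !ffunE big1 // => k _; rewrite mxE scale0r. Qed.

Lemma actAt_sumB I r (Q : pred I) (F : I -> 'M[C]_N) i (f : T) :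
  actAt (\sum_(k <- r | Q k) F k) i f = \sum_(k <- r | Q k) actAt (F k) i f.
Proof.
apply: (big_ind2 (fun B g => actAt B i f = g)); first exact: actAt0B.
  by move=> a1 a2 b1 b2 <- <-; rewrite actAtBD.
by [].
Qed.

Lemma actAtBZ c (B : 'M[C]_N) i (f : T) : actAt (c *: B) i f = c *: actAt B i f.
Proof.
apply/ffunP=> J; rewrite !ffunE scaler_sumr; apply: eq_bigr=> k _; by rewrite mxE scalerA.
Qed.

Lemma actAtBN (B : 'M[C]_N) i (f : T) : actAt (- B) i f = - actAt B i f.
Proof. by rewrite -scaleN1r actAtBZ scaleN1r. Qed.

Lemma upd_same (J : {ffun 'I_n -> 'I_N}) i k : upd J i k i = k.
Proof. by rewrite ffunE eqxx. Qed.
Lemma upd_upd (J : {ffun 'I_n -> 'I_N}) i k l : upd (upd J i k) i l = upd J i l.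
Proof. by apply/ffunP=> j; rewrite !ffunE; case: eqP. Qed.
Lemma upd_id (J : {ffun 'I_n -> 'I_N}) i : upd J i (J i) = J.
Proof. by apply/ffunP=> j; rewrite !ffunE; case: eqP=> // ->. Qed.

Lemma actAtM (B B' : 'M[C]_N) i (f : T) : actAt B i (actAt B' i f) = actAt (B *m B') i f.
Proof.
apply/ffunP=> J; rewrite !ffunE.
under eq_bigr=> k _ do rewrite ffunE upd_same scaler_sumr.
rewrite exchange_big /=; apply: eq_bigr=> l _.
rewrite mxE scaler_suml; apply: eq_bigr=> k _; by rewrite upd_upd scalerA.
Qed.

Lemma actAt_scalar c i (f : T) : actAt (c%:M) i f = c *: f.
Proof.
apply/ffunP=> J; rewrite !ffunE (bigD1 (J i)) //= big1 ?addr0.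
  by rewrite mxE eqxx mulr1n upd_id.
by move=> k /negPf nk; rewrite mxE eq_sym nk mulr0n scale0r.
Qed.

Lemma actAt_mulP (B : 'M[C]_N) i p (f : T) : actAt B i (mulP p f) = mulP p (actAt B i f).
Proof.
apply/ffunP=> J; rewrite !ffunE mulr_sumr; apply: eq_bigr=> k _; by rewrite ffunE scalerAr.
Qed.

Lemma actAt_dP (B : 'M[C]_N) i p (f : T) : actAt B i (dP p f) = dP p (actAt B i f).
Proof.
apply/ffunP=> J; rewrite !ffunE raddf_sum /=; apply: eq_bigr=> k _; by rewrite ffunE mderivZ.
Qed.

Lemma mulPM p q (f : T) : mulP p (mulP q f) = mulP (p * q) f.
Proof. by apply/ffunP=> J; rewrite !ffunE mulrA. Qed.

Lemma mulP_sumP I r (Q : pred I) (F : I -> P) (f : T) :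
  mulP (\sum_(k <- r | Q k) F k) f = \sum_(k <- r | Q k) mulP (F k) f.
Proof.
elim/big_rec2: _ => [|k x y _ <-]; first by apply/ffunP=> J; rewrite !ffunE mul0r.
by apply/ffunP=> J; rewrite !ffunE mulrDl.
Qed.

Lemma mulPZ c p (f : T) : mulP (c *: p) f = c *: mulP p f.
Proof. by apply/ffunP=> J; rewrite !ffunE scalerAl. Qed.

Lemma mulPC c (f : T) : mulP (c%:MP) f = c *: f.
Proof. by apply/ffunP=> J; rewrite !ffunE mul_mpolyC. Qed.

Lemma dP_mulP r p (f : T) : dP r (mulP p f) = mulP (mderiv r p) f + mulP p (dP r f).
Proof. by apply/ffunP=> J; rewrite !ffunE mderivM. Qed.

Lemma dPC p q (f : T) : dP p (dP q f) = dP q (dP p f).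
Proof. by apply/ffunP=> J; rewrite !ffunE mderiv_comm. Qed.

Lemma mderivXi (p q : 'I_(dimg N)) : mderiv p ('X_q : P) = (q == p)%:R%:MP.
Proof.
rewrite mderivX mnm1E; case: eqP=> [->|_]; last by rewrite scale0r mpolyC0.
have -> : (U_(p) - U_(p) = 0)%MM by apply/mnmP=> k; rewrite mnmBE subnn mnm0E.
by rewrite scale1r mpolyX0 mpolyC1.
Qed.

End Lin.
Lemma mxvec_sum (R : pzRingType) k (A B : 'M[R]_k) :
  \sum_(x < k * k) mxvec A 0 x * mxvec B 0 x = \sum_i \sum_j A i j * B i j.
Proof.
rewrite (reindex _ (curry_mxvec_bij _ _)) /= pair_bigA.
by apply: eq_bigr => [[i j]] _ /=; rewrite !mxvecE.
Qed.

Lemma swap1 (R : comUnitRingType) m k (e : m = k) (A : 'M[R]_(m, k)) (B : 'M[R]_(k, m)) :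
  A *m B = 1%:M -> B *m A = 1%:M.
Proof. by subst k; apply: mulmx1C. Qed.

Lemma widen_lift n (p : 'I_n) : widen_ord (leqnSn n) p = lift ord_max p.
Proof. by apply: val_inj; rewrite /= /bump leqNgt ltn_ord. Qed.

Section Compl.
Variables (C : numClosedFieldType) (N : nat) (b : 'I_(dimg N) -> 'M[C]_N).
Hypotheses (hN : (0 < N)%N) (hb_tr : forall p, \tr (b p) = 0)
  (hb_on : forall p q, \tr (b p *m b q) = (p == q)%:R).

Local Notation m := (dimg N).+1.
Definition Bk (k : 'I_m) : 'M[C]_N := if unlift ord_max k is Some p then b p else 1%:M.
Definition dd (k : 'I_m) : C := if k == ord_max then N%:R else 1.

Lemma NR0 : (N%:R : C) != 0.
Proof. by rewrite pnatr_eq0 -lt0n. Qed.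

Lemma gram k l : \tr (Bk k *m Bk l) = (k == l)%:R * dd k.
Proof.
have nl : forall p0 : 'I_(dimg N), (lift ord_max p0 == ord_max) = false.
  by move=> p0; rewrite eq_sym (negPf (neq_lift _ _)).
rewrite /Bk /dd; case: unliftP => [p ->|->]; case: unliftP => [q ->|->].
- by rewrite hb_on (inj_eq (@lift_inj _ _)) nl mulr1.
- by rewrite mulmx1 hb_tr nl mul0r.
- by rewrite mul1mx hb_tr (negPf (neq_lift _ _)) mul0r.
- by rewrite mulmx1 mxtrace1 !eqxx mul1r.
Qed.

Lemma m_eq : m = (N * N)%N.
Proof. rewrite /dimg; case: N hN => // k _; rewrite expnS expn1 /=; lia. Qed.

Lemma compl i j k l :
  \sum_p b p i j * b p k l + N%:R^-1 * ((i == j)%:R * (k == l)%:R)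
  = ((j == k) && (i == l))%:R.
Proof.
pose Bm : 'M[C]_(m, N * N) := \matrix_(k, x) mxvec (Bk k) 0 x.
pose Bt : 'M[C]_(N * N, m) := \matrix_(x, k) mxvec (Bk k)^T 0 x.
pose Di : 'M[C]_m := diag_mx (\row_k (dd k)^-1).
have BB : Bm *m (Bt *m Di) = 1%:M.
  rewrite mulmxA; apply/matrixP=> k1 k2; rewrite mul_mx_diag !mxE.
  under eq_bigr=> x _ do rewrite !mxE.
  rewrite mxvec_sum.
  have -> : \sum_i0 \sum_j0 Bk k1 i0 j0 * (Bk k2)^T i0 j0 = \tr (Bk k1 *m Bk k2).
    rewrite /mxtrace; apply: eq_bigr=> i0 _; rewrite mxE; apply: eq_bigr=> j0 _.
    by rewrite mxE.
  rewrite gram; case: eqP=> [->|_]; last by rewrite !mul0r.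
  rewrite mul1r mulfV // /dd; case: ifP=> _; [exact: NR0| exact: oner_neq0].
have := swap1 m_eq BB => /matrixP /(_ (mxvec_index j i) (mxvec_index k l)).
rewrite !mxE /mxvec_index (inj_eq (@cast_ord_inj _ _ _)) (inj_eq (@enum_rank_inj _)).
rewrite -/(mxvec_index j i) -/(mxvec_index k l).
have wl : forall p : 'I_(dimg N), widen_ord (leqnSn _) p = lift ord_max p.
  by move=> p; apply: val_inj; rewrite /= /bump leqNgt ltn_ord.
rewrite xpair_eqE => <-; rewrite mul_mx_diag big_ord_recr /=.
congr (_ + _).
  apply: eq_bigr=> p _; rewrite !mxE.
  rewrite widen_lift.
  rewrite !mxvecE /Bk liftK !mxE.
  by rewrite /dd eq_sym (negPf (neq_lift _ _)) invr1 mulr1.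
rewrite !mxE !mxvecE /Bk unlift_none !mxE /dd eqxx.
by rewrite mulrA [N%:R^-1 * _]mulrC.
Qed.

Lemma casimir : \sum_p b p *m b p = ((dimg N)%:R / N%:R)%:M.
Proof.
apply/matrixP=> a d; rewrite summxE !mxE.
under eq_bigr=> p _ do rewrite mxE.
rewrite exchange_big /=.
have E c : \sum_p b p a c * b p c d = ((a == d)%:R - N%:R^-1 * ((a == c)%:R * (c == d)%:R)).
  by have := compl a c c d; rewrite eqxx /= => <-; rewrite addrK.
under eq_bigr=> c _ do rewrite E.
rewrite sumrB sumr_const card_ord -mulr_sumr.
rewrite (bigD1 a) //= big1 ?addr0; last by move=> c /negPf; rewrite eq_sym => ->; rewrite mul0r.
rewrite eqxx mul1r.
have dN : (dimg N)%:R = (N%:R ^+ 2 - 1 : C).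
  by rewrite /dimg natrB ?natrX // expn_gt0 hN.
rewrite dN; case: (a == d); last by rewrite mulr0 mul0rn subr0 mulr0n.
rewrite mulr1n mulr1 mulrBl expr2 mulfK ?NR0 // mul1r.
by rewrite -mulr_natr mulrC.
Qed.
End Compl.
Lemma cyc3 (V : nmodType) (I : finType) (F : I -> I -> I -> V) :
  \sum_q \sum_r \sum_s F q r s = \sum_q \sum_r \sum_s F r s q.
Proof.
rewrite [RHS]exchange_big /=; apply: eq_bigr=> r _.
by rewrite exchange_big.
Qed.

Lemma ex_in3 (V : nmodType) (I1 I2 I3 : finType) (F : I1 -> I2 -> I3 -> V) :
  \sum_p \sum_s \sum_t F p s t = \sum_t \sum_p \sum_s F p s t.
Proof.
under eq_bigr=> p _ do rewrite exchange_big.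
by rewrite exchange_big.
Qed.

Lemma swap14 (V : nmodType) (I : finType) (F : I -> I -> I -> I -> V) :
  \sum_q \sum_p \sum_s \sum_t F q p s t = \sum_q \sum_p \sum_s \sum_t F t p s q.
Proof.
under eq_bigr=> q _ do rewrite ex_in3.
under [RHS]eq_bigr=> q _ do rewrite ex_in3.
by rewrite [RHS]exchange_big.
Qed.

Lemma swap23 (V : nmodType) (I : finType) (F : I -> I -> I -> I -> V) :
  \sum_q \sum_p \sum_s \sum_t F q p s t = \sum_q \sum_p \sum_s \sum_t F q s p t.
Proof. by apply: eq_bigr=> q _; rewrite exchange_big. Qed.
Section Main.
Variables (C : numClosedFieldType) (N n : nat) (b : 'I_(dimg N) -> 'M[C]_N).
Hypotheses (hN : (0 < N)%N) (hn : (0 < n)%N) (hb_tr : forall p, \tr (b p) = 0)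
  (hb_on : forall p q, \tr (b p *m b q) = (p == q)%:R).
Variable f : tens C N n.
Hypothesis hf : g_invariant b f.
Local Notation T := (tens C N n).
Local Notation P := {mpoly C[dimg N]}.
Local Notation I := 'I_(dimg N).

Definition ct (M : 'M[C]_N) q p := \tr ((M *m b q - b q *m M) *m b p).
Definition KK M p : P := \sum_q ct M q p *: 'X_q.

Lemma mulP_sumf (p : P) J (r : seq J) (Q : pred J) (F : J -> T) :
  mulP p (\sum_(i <- r | Q i) F i) = \sum_(i <- r | Q i) mulP p (F i).
Proof. exact: linear_sum. Qed.
Lemma actAt_sumf B i J (r : seq J) (Q : pred J) (F : J -> T) :
  actAt B i (\sum_(k <- r | Q k) F k) = \sum_(k <- r | Q k) actAt B i (F k).
Proof. exact: linear_sum. Qed.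
Lemma dP_sumf p J (r : seq J) (Q : pred J) (F : J -> T) :
  dP p (\sum_(k <- r | Q k) F k) = \sum_(k <- r | Q k) dP p (F k).
Proof. exact: linear_sum. Qed.

Lemma NR0' : (N%:R : C) != 0.
Proof. by rewrite pnatr_eq0 -lt0n. Qed.

Lemma invM M : \sum_i actAt M i f
  = (n%:R * (\tr M / N%:R)) *: f + \sum_p mulP (KK M p) (dP p f).
Proof.
pose c := \tr M / N%:R.
have trX : \tr (M - c%:M) = 0.
  by rewrite raddfB /= mxtrace_scalar /c -[(\tr M / N%:R) *+ N]mulr_natr mulfVK ?NR0' // subrr.
have := hf trX.
have Kc p : \sum_q \tr (((M - c%:M) *m b q - b q *m (M - c%:M)) *m b p) *: 'X_q = KK M p.
  apply: eq_bigr=> q _; rewrite /ct; congr (\tr (_ *m _) *: _).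
  by rewrite mulmxBl mulmxBr scalar_mxC opprB addrA subrK.
have -> : \sum_i actAt (M - c%:M) i f = \sum_i actAt M i f - (c *: f) *+ n.
  rewrite (eq_bigr (fun i => actAt M i f - c *: f)); last first.
    by move=> i _; rewrite actAtBD actAtBN actAt_scalar.
  by rewrite sumrB sumr_const card_ord.
have -> : \sum_p mulP (\sum_q \tr (((M - c%:M) *m b q - b q *m (M - c%:M)) *m b p) *: 'X_q) (dP p f)
   = \sum_p mulP (KK M p) (dP p f).
  by apply: eq_bigr=> p _; rewrite Kc.
move=> /eqP; rewrite subr_eq => /eqP ->.
by rewrite addrC -scaler_nat scalerA.
Qed.

Lemma mderivK M r p : mderiv r (KK M p) = (ct M r p)%:MP.
Proof.
rewrite /KK raddf_sum (bigD1 r) //= big1 ?addr0.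
  by rewrite mderivZ mderivXi eqxx mpolyC1 -mul_mpolyC mulr1.
by move=> q /negPf nq; rewrite mderivZ mderivXi nq mpolyC0 scaler0.
Qed.

Lemma dP_sumK M r (g : I -> T) : dP r (\sum_p mulP (KK M p) (g p))
  = \sum_p (ct M r p *: g p + mulP (KK M p) (dP r (g p))).
Proof.
rewrite dP_sumf; apply: eq_bigr=> p _; by rewrite dP_mulP mderivK mulPC.
Qed.

Lemma Z1 (V : lmodType C) (E : I -> I -> I -> V) (hE : forall q r s, E q r s = E r s q) p :
  \sum_q \sum_r \sum_s ct (b q *m b r) s p *: E q r s = 0.
Proof.
apply/eqP; rewrite -subr_eq0 subr0; apply/eqP.
under eq_bigr=> q _ do under eq_bigr=> r _ do
  (under eq_bigr=> s _ do rewrite /ct mulmxBl raddfB scalerBl /=; rewrite sumrB).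
under eq_bigr=> q _ do rewrite sumrB.
rewrite sumrB; apply/eqP; rewrite subr_eq0; apply/eqP.
rewrite [RHS]cyc3; do 3! (apply: eq_bigr=> ? _); by rewrite !mulmxA hE.
Qed.

Lemma mulP0 (g : T) : mulP 0 g = 0.
Proof. by apply/ffunP=> J; rewrite !ffunE mul0r. Qed.

Lemma fop_eq : fop b f = (n%:R / N%:R) *: Fop f.
Proof.
have xx i : xop b i (xop b i f) = \sum_q \sum_r mulP ('X_q * 'X_r) (actAt (b q *m b r) i f).
  rewrite /xop; apply: eq_bigr=> q _; rewrite actAt_sumf mulP_sumf; apply: eq_bigr=> r _.
  by rewrite actAt_mulP mulPM actAtM.
rewrite /fop /Fop; under eq_bigr=> i _ do rewrite xx.
rewrite exchange_big /=; under eq_bigr=> q _ do rewrite exchange_big /=.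
under eq_bigr=> q _ do under eq_bigr=> r _ do rewrite -mulP_sumf invM hb_on linearD.
under eq_bigr=> q _ do rewrite big_split /=.
rewrite big_split /= [RHS]scalerA [_ * 2^-1]mulrC -scalerA; congr (_ *: _).
have -> : \sum_q \sum_r mulP ('X_q * 'X_r) (\sum_p mulP (KK (b q *m b r) p) (dP p f)) = 0.
  transitivity (\sum_p mulP (\sum_q \sum_r 'X_q * 'X_r * KK (b q *m b r) p) (dP p f)).
    under eq_bigr=> q _ do under eq_bigr=> r _ do
      (rewrite mulP_sumf; under eq_bigr=> p _ do rewrite mulPM).
    rewrite ex_in3; apply: eq_bigr=> p _; rewrite mulP_sumP; apply: eq_bigr=> q _.
    by rewrite mulP_sumP.
  apply: big1 => p _.
  have -> : \sum_q \sum_r 'X_q * 'X_r * KK (b q *m b r) p = 0; last exact: mulP0.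
  under eq_bigr=> q _ do under eq_bigr=> r _ do
    (rewrite /KK mulr_sumr; under eq_bigr=> s _ do rewrite -scalerAr).
  by apply: Z1 => q r s; ring.
rewrite addr0 scaler_sumr; apply: eq_bigr=> q _.
rewrite (bigD1 q) //= big1 ?addr0.
  by rewrite eqxx mul1r linearZ.
by move=> r /negPf nr; rewrite eq_sym nr mul0r mulr0 scale0r linear0.
Qed.

Lemma tr4 (A B D E : 'M[C]_N) : \tr (A *m B *m D *m E) = \tr (E *m A *m B *m D).
Proof. by rewrite mxtrace_mulC !mulmxA. Qed.

Lemma sub3 (V : zmodType) (F G : I -> I -> I -> V) :
  \sum_p \sum_q \sum_s F p q s - \sum_p \sum_q \sum_s G p q s
  = \sum_p \sum_q \sum_s (F p q s - G p q s).
Proof.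
rewrite -sumrB; apply: eq_bigr=> p _; rewrite -sumrB; apply: eq_bigr=> q _.
by rewrite -sumrB.
Qed.

Lemma sub4 (V : zmodType) (F G : I -> I -> I -> I -> V) :
  \sum_p \sum_q \sum_s \sum_t F p q s t - \sum_p \sum_q \sum_s \sum_t G p q s t
  = \sum_p \sum_q \sum_s \sum_t (F p q s t - G p q s t).
Proof.
rewrite -sumrB; apply: eq_bigr=> p _; exact: sub3.
Qed.

Lemma Z2 (V : lmodType C) (E : I -> I -> I -> V) (hE : forall p q s, E p q s = E q s p) t :
  \sum_p \sum_q \sum_s ct (b p *m b q) t s *: E p q s = 0.
Proof.
apply/eqP; rewrite -subr_eq0 subr0; apply/eqP.
rewrite (_ : \sum_p _ = \sum_p \sum_q \sum_s (\tr (b p *m b q *m b t *m b s) *: E p q s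
   - \tr (b t *m b p *m b q *m b s) *: E p q s)); last first.
  do 3! (apply: eq_bigr=> ? _); by rewrite /ct mulmxBl raddfB scalerBl /= !mulmxA.
rewrite -sub3; apply/eqP; rewrite subr_eq0; apply/eqP.
rewrite cyc3; do 3! (apply: eq_bigr=> ? _).
by rewrite [in LHS]tr4 [in LHS]tr4 -hE.
Qed.

Lemma ZBC (V : lmodType C) (D : I -> I -> V) (hD : forall p s, D p s = D s p) :
  \sum_p \sum_q \sum_s (ct (b p *m b q) q s *: D p s + ct (b p *m b q) p s *: D q s) = 0.
Proof.
under eq_bigr=> p _ do under eq_bigr=> q _ do rewrite big_split /=.
under eq_bigr=> p _ do rewrite big_split /=.
rewrite big_split /=.
rewrite [X in _ + X = _]exchange_big /=.
rewrite -big_split /=.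
under eq_bigr=> p _ do rewrite -big_split /=.
under eq_bigr=> p _ do under eq_bigr=> q _ do rewrite -big_split /=.
rewrite (_ : \sum_p _ = \sum_p \sum_q \sum_s (\tr (b p *m b q *m b q *m b s) *: D p s
   - \tr (b q *m b q *m b p *m b s) *: D p s)); last first.
  do 3! (apply: eq_bigr=> ? _); rewrite -scalerDl -scalerBl; congr (_ *: _).
  rewrite /ct -raddfD -raddfB /=; congr (\tr _).
  rewrite -mulmxDl -mulmxBl; congr (_ *m _).
  by rewrite !mulmxA addrA subrK.
apply/eqP; rewrite -sub3 subr_eq0; apply/eqP.
rewrite exchange_big [RHS]exchange_big /=; apply: eq_bigr=> q _.
rewrite exchange_big /=; do 2! (apply: eq_bigr=> ? _).
by rewrite hD [in LHS]tr4 [in LHS]tr4 [in LHS]tr4.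
Qed.

Lemma nR0 : (n%:R : C) != 0.
Proof. by rewrite pnatr_eq0 -lt0n. Qed.

Lemma d1inv M p : \sum_i actAt M i (dP p f) = (n%:R * (\tr M / N%:R)) *: dP p f
  + \sum_s (ct M p s *: dP s f + mulP (KK M s) (dP p (dP s f))).
Proof.
under eq_bigr=> i _ do rewrite actAt_dP.
by rewrite -dP_sumf invM linearD linearZ /= dP_sumK.
Qed.

Lemma d2inv M p q : \sum_i actAt M i (dP p (dP q f))
  = (n%:R * (\tr M / N%:R)) *: dP p (dP q f)
  + \sum_s (ct M q s *: dP p (dP s f) + (ct M p s *: dP q (dP s f)
              + mulP (KK M s) (dP p (dP q (dP s f))))).
Proof.
under eq_bigr=> i _ do rewrite actAt_dP.
rewrite -dP_sumf d1inv linearD linearZ /= dP_sumf; congr (_ + _).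
apply: eq_bigr=> s _; by rewrite linearD linearZ /= dP_mulP mderivK mulPC.
Qed.

Lemma eop_eq : eop b f = (N%:R / n%:R) *: Eop f.
Proof.
set k := (N%:R / n%:R : C).
have yy i : yop b i (yop b i f)
    = (k * k) *: \sum_p \sum_q actAt (b p *m b q) i (dP p (dP q f)).
  rewrite /yop -/k -scalerA; congr (_ *: _); rewrite [RHS]scaler_sumr; apply: eq_bigr=> p _.
  rewrite !linearZ /=; congr (_ *: _); rewrite dP_sumf actAt_sumf; apply: eq_bigr=> q _.
  by rewrite -actAt_dP actAtM.
rewrite /eop /Eop; under eq_bigr=> i _ do rewrite yy.
rewrite -scaler_sumr -(ex_in3 (fun p q i => actAt (b p *m b q) i (dP p (dP q f)))).
under eq_bigr=> p _ do under eq_bigr=> q _ do rewrite d2inv hb_on.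
under eq_bigr=> p _ do under eq_bigr=> q _ do
   (under eq_bigr=> s _ do rewrite addrA; rewrite big_split /=).
under eq_bigr=> p _ do under eq_bigr=> q _ do rewrite addrA.
under eq_bigr=> p _ do rewrite big_split /=.
rewrite big_split /=.
under eq_bigr=> p _ do rewrite big_split /=.
rewrite big_split /=.
rewrite (@ZBC _ (fun p s => dP p (dP s f))) ?addr0; last by move=> p s; rewrite dPC.
have -> : \sum_p \sum_q \sum_s mulP (KK (b p *m b q) s) (dP p (dP q (dP s f))) = 0.
  transitivity (\sum_t \sum_p \sum_q \sum_s ct (b p *m b q) t s *: mulP 'X_t (dP p (dP q (dP s f)))).
    under eq_bigr=> p _ do under eq_bigr=> q _ do under eq_bigr=> s _ do
      (rewrite /KK mulP_sumP; under eq_bigr=> t _ do rewrite mulPZ).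
    under eq_bigr=> p _ do rewrite ex_in3.
    by rewrite exchange_big.
  apply: big1=> t _; apply: Z2 => p q s.
  by rewrite dPC [dP p (dP s f)]dPC.
rewrite addr0.
have -> : \sum_p \sum_q (n%:R * ((p == q)%:R / N%:R)) *: dP p (dP q f)
    = (n%:R / N%:R) *: \sum_p dP p (dP p f).
  rewrite scaler_sumr; apply: eq_bigr=> p _.
  rewrite (bigD1 p) //= big1 ?addr0; first by rewrite eqxx mul1r.
  by move=> q /negPf nq; rewrite eq_sym nq mul0r mulr0 scale0r.
rewrite !scalerA; congr (_ *: _); rewrite /k.
have := NR0'; have := nR0; move=> h1 h2; field.
by rewrite h1 h2.
Qed.

Lemma add4 (V : zmodType) (F G : I -> I -> I -> I -> V) :
  \sum_p \sum_q \sum_s \sum_t (F p q s t + G p q s t)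
  = \sum_p \sum_q \sum_s \sum_t F p q s t + \sum_p \sum_q \sum_s \sum_t G p q s t.
Proof.
rewrite -big_split; apply: eq_bigr=> p _; rewrite -big_split; apply: eq_bigr=> q _.
rewrite -big_split; apply: eq_bigr=> s _; by rewrite -big_split.
Qed.

Lemma Z3 (V : lmodType C) (E : I -> I -> I -> I -> V)
  (h1 : forall q p s t, E q p s t = E t p s q) (h2 : forall q p s t, E q p s t = E q s p t) :
  \sum_q \sum_p \sum_s \sum_t ct (b q *m b p + b p *m b q) t s *: E q p s t = 0.
Proof.
rewrite (_ : \sum_q _ = \sum_q \sum_p \sum_s \sum_t
   ((\tr (b q *m b p *m b t *m b s) *: E q p s t - \tr (b t *m b p *m b q *m b s) *: E q p s t)
  + (\tr (b p *m b q *m b t *m b s) *: E q p s t - \tr (b t *m b q *m b p *m b s) *: E q p s t)));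
  last first.
  do 4! (apply: eq_bigr=> ? _); rewrite -!scalerBl -scalerDl; congr (_ *: _).
  rewrite /ct mulmxBl !mulmxDl !mulmxDr !raddfB !raddfD /= !mulmxA.
  rewrite mulmxDl raddfD /=. ring.
rewrite add4 -!sub4.
have -> : \sum_q \sum_p \sum_s \sum_t \tr (b q *m b p *m b t *m b s) *: E q p s t
        = \sum_q \sum_p \sum_s \sum_t \tr (b t *m b p *m b q *m b s) *: E q p s t.
  rewrite swap14; do 4! (apply: eq_bigr=> ? _); by rewrite -h1.
have -> : \sum_q \sum_p \sum_s \sum_t \tr (b t *m b q *m b p *m b s) *: E q p s t
        = \sum_q \sum_p \sum_s \sum_t \tr (b p *m b q *m b t *m b s) *: E q p s t.
  rewrite swap14 swap23; apply: eq_bigr=> q _; apply: eq_bigr=> p _;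
  apply: eq_bigr=> s _; apply: eq_bigr=> t _.
  by rewrite tr4 h1 -h2.
by rewrite !subrr addr0.
Qed.

Lemma sumct q s : \sum_p ct (b q *m b p + b p *m b q) p s = 0.
Proof.
rewrite /ct -raddf_sum /= -mulmx_suml.
have -> : \sum_p ((b q *m b p + b p *m b q) *m b p - b p *m (b q *m b p + b p *m b q))
    = b q *m (\sum_p b p *m b p) - (\sum_p b p *m b p) *m b q.
  rewrite mulmx_sumr mulmx_suml -sumrB; apply: eq_bigr=> p _.
  by rewrite mulmxDl mulmxDr !mulmxA opprD addrA addrK.
by rewrite (casimir hN hb_tr hb_on) scalar_mxC subrr mul0mx raddf0.
Qed.

Lemma hop_eq : hop b f = Hop f.
Proof.
set k := (N%:R / n%:R : C).
have xy i : xop b i (yop b i f)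
    = k *: \sum_q \sum_p mulP 'X_q (actAt (b q *m b p) i (dP p f)).
  rewrite /xop /yop -/k [RHS]scaler_sumr; apply: eq_bigr=> q _.
  rewrite !linearZ /=; congr (_ *: _); rewrite actAt_sumf mulP_sumf; apply: eq_bigr=> p _.
  by rewrite actAtM.
have yx i : yop b i (xop b i f)
    = k *: (actAt (\sum_p b p *m b p) i f
            + \sum_q \sum_p mulP 'X_q (actAt (b p *m b q) i (dP p f))).
  rewrite /xop /yop -/k; congr (_ *: _).
  rewrite [X in _ = _ + X]exchange_big /= actAt_sumB -big_split /=; apply: eq_bigr=> p _.
  rewrite dP_sumf actAt_sumf.
  rewrite (eq_bigr (fun q => actAt (b p) i ((q == p)%:R *: actAt (b q) i f)
       + actAt (b p) i (mulP 'X_q (dP p (actAt (b q) i f))))); last first.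
    by move=> q _; rewrite dP_mulP mderivXi mulPC linearD.
  rewrite big_split /=; congr (_ + _).
    rewrite (bigD1 p) //= big1 ?addr0; first by rewrite eqxx linearZ /= scale1r actAtM.
    by move=> q /negPf nq; rewrite nq scale0r linear0.
  apply: eq_bigr=> q _; by rewrite actAt_mulP -actAt_dP actAtM.
have comb i : \sum_q \sum_p mulP 'X_q (actAt (b q *m b p) i (dP p f))
    + \sum_q \sum_p mulP 'X_q (actAt (b p *m b q) i (dP p f))
    = \sum_q \sum_p mulP 'X_q (actAt (b q *m b p + b p *m b q) i (dP p f)).
  rewrite -big_split; apply: eq_bigr=> q _; rewrite -big_split; apply: eq_bigr=> p _.
  by rewrite actAtBD linearD.
rewrite /hop /Hop; under eq_bigr=> i _ do rewrite xy yx -scalerDr addrCA comb.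
rewrite -scaler_sumr big_split /=.
under eq_bigr=> i _ do rewrite (casimir hN hb_tr hb_on) actAt_scalar.
rewrite sumr_const card_ord.
rewrite -(ex_in3 (fun q p i => mulP 'X_q (actAt (b q *m b p + b p *m b q) i (dP p f)))).
have Hsum : \sum_q \sum_p \sum_i mulP 'X_q (actAt (b q *m b p + b p *m b q) i (dP p f))
    = (2 * n%:R / N%:R) *: \sum_q mulP 'X_q (dP q f).
under eq_bigr=> q _ do under eq_bigr=> p _ do
  rewrite -mulP_sumf d1inv mxtraceD !hb_on linearD linearZ /= mulP_sumf.
under eq_bigr=> q _ do under eq_bigr=> p _ do
  (under eq_bigr=> s _ do rewrite linearD linearZ /= mulPM; rewrite big_split /=).
under eq_bigr=> q _ do under eq_bigr=> p _ do rewrite addrA.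
under eq_bigr=> q _ do rewrite big_split /=.
rewrite big_split /=.
under eq_bigr=> q _ do rewrite big_split /=.
rewrite big_split /=.
have -> : \sum_q \sum_p \sum_s ct (b q *m b p + b p *m b q) p s *: mulP 'X_q (dP s f) = 0.
  apply: big1=> q _; rewrite exchange_big /=; apply: big1=> s _.
  by rewrite -scaler_suml sumct scale0r.
have -> : \sum_q \sum_p \sum_s mulP ('X_q * KK (b q *m b p + b p *m b q) s) (dP p (dP s f)) = 0.
  rewrite -[RHS](@Z3 _ (fun q p s t => mulP ('X_q * 'X_t) (dP p (dP s f)))); last first.
  - by move=> q p s t; rewrite dPC.
  - by move=> q p s t; rewrite mulrC.
  apply: eq_bigr=> q _; apply: eq_bigr=> p _; apply: eq_bigr=> s _.
  rewrite /KK mulr_sumr mulP_sumP; apply: eq_bigr=> t _.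
  by rewrite -scalerAr mulPZ.
rewrite !addr0.
  rewrite scaler_sumr; apply: eq_bigr=> q _.
  rewrite (bigD1 q) //= big1 ?addr0; first by rewrite eqxx /= -natrD; congr (_ *: _); rewrite mulrA [n%:R * _]mulrC.
  by move=> p /negPf np; rewrite eq_sym np addr0 mul0r mulr0 scale0r.
rewrite Hsum -scaler_nat !scalerA !scalerDr !scalerA addrC.
have h1 := NR0'; have h2 := nR0.
congr (_ + _).
  rewrite -[RHS]scale1r; congr (_ *: _); rewrite /k; field.
  by rewrite h1 h2.
congr (_ *: _); rewrite /k; field.
by rewrite h1 h2.
Qed.

End Main.

Unset Implicit Arguments.
Set Strict Implicit.

Theorem mainTheorem14 (C : numClosedFieldType) (N n : nat)
  (b : 'I_(dimg N) -> 'M[C]_N)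
  (hN : (0 < N)%N) (hn : (0 < n)%N) (hNn : (N %| n)%N)
  (hb_tr : forall p, \tr (b p) = 0)
  (hb_on : forall p q, \tr (b p *m b q) = (p == q)%:R)
  (f : tens C N n) (hf : g_invariant b f) :
  [/\ hop b f = Hop f,
      eop b f = (N%:R / n%:R : C) *: Eop f
    & fop b f = (n%:R / N%:R : C) *: Fop f].
Proof.
by split; [apply: hop_eq | apply: eop_eq | apply: fop_eq].
Qed.
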